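(* Let $X,Y\subseteq\mathbb{R}^n$ and let $P$ be a coordinate subspace of $\mathbb{R}^n$. Then $\pi_P(X\cup Y)=\pi_PX\cup\pi_PY$. If moreover $X$ and $Y$ are closed and $X\cup Y$ is $\ell_1$-convex, then also $\pi_P(X\cap Y)=\pi_PX\cap\pi_PY$.
   Context: A coordinate subspace is a linear subspace spanned by a subset of the standard basis; $\pi_P$ is orthogonal projection onto $P$. A subset $Z\subseteq\mathbb{R}^n$ is $\ell_1$-convex if for all $z,z'\in Z$, with $D=\sum_i|z_i-z'_i|$, there is $\gamma\colon[0,D]\to Z$ with $\gamma(0)=z,\gamma(D)=z'$ and $\sum_i|\gamma_i(t)-\gamma_i(t')|=|t-t'|$ for all $t,t'$. *)

(* Defs.v *)
(* Points of R^n are row vectors 'rV[R]_n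
   with the canonical (product/max-norm) topology of MathComp-Analysis. *)
From HB Require Import structures.
From mathcomp Require Import all_boot all_order all_algebra.
From mathcomp Require Import all_classical all_reals all_analysis.
Set Implicit Arguments. Unset Strict Implicit. Unset Printing Implicit Defensive.
Import Order.TTheory GRing.Theory Num.Theory.
Import numFieldNormedType.Exports.
Local Open Scope classical_set_scope.
Local Open Scope ring_scope.

(* A coordinate subspace P of R^n is the span of {e_i | i \in S} for an index
   set S : {set 'I_n}; orthogonal projection onto it keeps the coordinates in S
   and zeroes the others. *)
Definition coord_proj {R : realType} {n : nat} (S : {set 'I_n}) (x : 'rV[R]_n) : 'rV[R]_n :=
  \row_i (if i \in S then x ord0 i else 0).

Definition l1dist {R : realType} {n : nat} (x y : 'rV[R]_n) : R :=
  \sum_i `|x ord0 i - y ord0 i|.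

(* l1-convexity: any two points are joined inside Z by an l1-geodesic
   gamma : [0, D] -> Z parametrized by arclength. *)
Definition l1_convex {R : realType} {n : nat} (Z : set 'rV[R]_n) : Prop :=
  forall z z', Z z -> Z z' ->
    exists gamma : R -> 'rV[R]_n,
      [/\ gamma 0 = z, gamma (l1dist z z') = z',
          (forall t, 0 <= t <= l1dist z z' -> Z (gamma t)) &
          (forall t t', 0 <= t <= l1dist z z' -> 0 <= t' <= l1dist z z' ->
             l1dist (gamma t) (gamma t') = `|t - t'|)].

(* Main.v *)
Require Import Defs.
From HB Require Import structures.
From mathcomp Require Import all_boot all_order all_algebra.
From mathcomp Require Import all_classical all_reals all_analysis.
From mathcomp Require Import lra.
Import Order.TTheory GRing.Theory Num.Theory.
Import numFieldNormedType.Exports.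
Local Open Scope classical_set_scope.
Local Open Scope ring_scope.

Lemma l1_coord_le (R : realType) n (x y : 'rV[R]_n) i :
  `|x ord0 i - y ord0 i| <= l1dist x y.
Proof.
rewrite /l1dist (bigD1 i) //= lerDl; exact: sumr_ge0.
Qed.

Lemma l1_ge0 (R : realType) n (x y : 'rV[R]_n) : 0 <= l1dist x y.
Proof. exact: sumr_ge0. Qed.

Lemma closed_l1 (R : realType) n (X : set 'rV[R]_n) p :
  closed X -> (forall e, 0 < e -> exists z, X z /\ l1dist p z < e) -> X p.
Proof.
move=> /closure_id cX H; rewrite cX => B /nbhs_ballP [e e0 sB].
have [z [Xz lz]] := H e e0.
exists z; split => //. 
apply: sB. rewrite -ball_normE /ball_ /=. rewrite /Num.Def.normr /= mx_normrE.
apply: bigmax_lt => // -[i j] _ /=; rewrite !mxE (ord1 i).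
apply: (le_lt_trans _ lz). exact: l1_coord_le.
Qed.

Lemma geo_proj (R : realType) n (S : {set 'I_n}) (x y : 'rV[R]_n)
  (g : R -> 'rV[R]_n) :
  coord_proj S x = coord_proj S y -> g 0 = x -> g (l1dist x y) = y ->
  (forall t t', 0 <= t <= l1dist x y -> 0 <= t' <= l1dist x y ->
             l1dist (g t) (g t') = `|t - t'|) ->
  forall t, 0 <= t <= l1dist x y -> coord_proj S (g t) = coord_proj S x.
Proof.
set D := l1dist x y => Pxy g0 gD H t /andP[t0 tD].
have D0 : 0 <= D by exact: l1_ge0.
have d1 : l1dist x (g t) = t.
  by rewrite -{1}g0 H ?lexx ?D0 ?t0 ?tD // sub0r normrN ger0_norm.
have d2 : l1dist (g t) y = D - t.
  by rewrite -{1}gD H ?lexx ?D0 ?t0 ?tD // distrC ger0_norm // subr_ge0.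
have Hs : \sum_i (`|x ord0 i - g t ord0 i| + `|g t ord0 i - y ord0 i|
                 - `|x ord0 i - y ord0 i|) = 0.
  rewrite big_split big_split /= sumrN.
  have -> : \sum_i `|x ord0 i - g t ord0 i| = t by exact: d1.
  have -> : \sum_i `|g t ord0 i - y ord0 i| = D - t by exact: d2.
  rewrite /D /l1dist; lra.
have Hz : forall i, `|x ord0 i - g t ord0 i| + `|g t ord0 i - y ord0 i|
                 - `|x ord0 i - y ord0 i| = 0.
  move=> i; apply: (psumr_eq0P _ Hs) => // j _; rewrite subr_ge0; exact: ler_distD.
apply/rowP => i; rewrite !mxE; case: ifP => // iS.
have xy : x ord0 i = y ord0 i.
  by have := congr1 (fun M : 'rV[R]_n => M ord0 i) Pxy; rewrite /= !mxE iS.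
have := Hz i; rewrite -xy subrr normr0 subr0 (distrC (g t ord0 i)) => h.
have h0 := normr_ge0 (x ord0 i - g t ord0 i).
have /eqP : `|x ord0 i - g t ord0 i| = 0 by lra.
by rewrite normr_eq0 subr_eq0 => /eqP.
Qed.

Theorem corollary2p5 (R : realType) (n : nat) (S : {set 'I_n})
    (X Y : set 'rV[R]_n) :
  coord_proj S @` (X `|` Y) = coord_proj S @` X `|` coord_proj S @` Y /\
  (closed X -> closed Y -> l1_convex (X `|` Y) ->
   coord_proj S @` (X `&` Y) = coord_proj S @` X `&` coord_proj S @` Y).
Proof.
split.
  apply/seteqP; split.
    by move=> _ [z [Xz|Yz] <-]; [left|right]; exists z.
  by move=> _ [[z Xz <-]|[z Yz <-]]; exists z => //; [left|right].
move=> cX cY conv; apply/seteqP; split.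
  by move=> _ [z [Xz Yz] <-]; split; exists z.
move=> p [[x Xx px] [y Yy py]].
have [g [g0 gD gZ gd]] := conv x y (or_introl Xx) (or_intror Yy).
have Pxy : coord_proj S x = coord_proj S y by rewrite px py.
have GP := @geo_proj _ _ _ _ _ g Pxy g0 gD gd.
move: gD gZ gd GP; set D := l1dist x y => gD gZ gd GP.
have D0 : 0 <= D by exact: l1_ge0.
pose A := [set t | 0 <= t <= D /\ X (g t)].
have A0 : A 0 by split; [rewrite lexx D0 | rewrite g0].
have hA : has_sup A.
  by split; [exists 0 | exists D => t [/andP[_ ?] _]].
pose s := sup A.
have s0 : 0 <= s by exact: sup_upper_bound.
have sD : s <= D.
  apply: sup_le_ub; first by exists 0.
  by move=> t [/andP[_ ?] _].
have sI : 0 <= s <= D by rewrite s0 sD.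
have Xs : X (g s).
  apply: closed_l1 => // e e0.
  have [t [tI Xt] lt] := sup_adherent e0 hA.
  exists (g t); split => //.
  have ts : t <= s by exact: sup_upper_bound.
  rewrite gd // ger0_norm ?subr_ge0 //; rewrite -/s in lt; lra.
have Ys : Y (g s).
  have [sDe|sD'] := eqVneq s D; first by rewrite sDe gD.
  have sltD : s < D by rewrite lt_neqAle sD' sD.
  apply: closed_l1 => // e e0.
  have [t [ts [tD tle]]] : exists t, s < t /\ t <= D /\ t - s < e.
    case: (leP (s + e / 2) D) => h; [exists (s + e / 2) | exists D]; lra.
  have tI : 0 <= t <= D by apply/andP; split => //; lra.
  have [Xt|Yt] := gZ t tI.
    have : t <= s by exact: sup_upper_bound.
    lra.
  exists (g t); split => //.
  rewrite gd // ler0_norm ?subr_le0 ?(ltW ts) //; lra.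
exists (g s) => //.
by rewrite GP.
Qed.
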